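(* Let $x$ be an element of a commutative ring $R$. The morphism of $R$-complexes $f:\mathcal{L}_x\to\check{C}_x$ given in degree $0$ by $f_0:R[U]\to R$, $r(U)\mapsto r(0)$, and in degree $1$ by $f_1:UR[U]\to R_x$, $r(U)\mapsto r(1/x)$, is a quasi-isomorphism.
   Context: $\mathcal{L}_x$ denotes the $R$-complex $0\to R[U]\xrightarrow{\psi} UR[U]\to 0$ with $R[U]$ in cohomological degree $0$, $UR[U]$ (polynomials without constant term) in degree $1$, and $\psi(r(U))=r(0)-(1-xU)r(U)$. $\check{C}_x$ denotes the complex $0\to R\xrightarrow{\iota_x} R_x\to 0$ in degrees $0,1$, with $\iota_x(r)=r/1$. *)

(* Defs.v *)
From HB Require Import structures.
From mathcomp Require Import all_boot all_order all_algebra.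
Set Implicit Arguments. Unset Strict Implicit. Unset Printing Implicit Defensive.
Import Order.TTheory GRing.Theory Num.Theory.
Local Open Scope ring_scope.

Definition is_localization_at (R : comNzRingType) (S : comPzRingType)
    (lam : {rmorphism R -> S}) (x : R) : Prop :=
  [/\ exists v : S, lam x * v = 1,
      forall s : S, exists (a : R) (n : nat), s * lam x ^+ n = lam a
    & forall a b : R, lam a = lam b -> exists k : nat, x ^+ k * a = x ^+ k * b].

(* The degree-1 term UR[U] of L_x: polynomials with zero constant term. *)
Definition UR (R : comNzRingType) : pred {poly R} := fun p => p`_0 == 0.

Definition Lx_psi (R : comNzRingType) (x : R) (r : {poly R}) : {poly R} :=
  r.[0]%:P - (1 - x%:P * 'X) * r.

Definition f0 (R : comNzRingType) (r : {poly R}) : R := r.[0].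

(* f_1 : UR[U] -> R_x, r(U) |-> r(1/x), where u is the inverse of x in R_x. *)
Definition f1 (R : comNzRingType) (S : comPzRingType)
    (lam : {rmorphism R -> S}) (u : S) (r : {poly R}) : S :=
  \sum_(i < size r) lam r`_i * u ^+ i.

(* Quasi-isomorphism between two-term complexes A0 --dA--> A1 and
   B0 --dB--> B1 (degrees 0,1), A1 given as a subgroup A1m of a zmodType:
   (f0,f1) is a morphism of complexes (dA lands in A1m, f1 o dA = dB o f0),
   and the induced maps on H^0 = ker d and H^1 = coker d are bijective. *)
Definition quasi_iso2 (A0 A1 B0 B1 : zmodType) (A1m : pred A1)
    (dA : A0 -> A1) (dB : B0 -> B1) (g0 : A0 -> B0) (g1 : A1 -> B1) : Prop :=
  [/\
      (forall a, A1m (dA a)) /\ (forall a, g1 (dA a) = dB (g0 a)),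
      (* H^0 injective *)
      (forall a, dA a = 0 -> g0 a = 0 -> a = 0),
      (* H^0 surjective *)
      (forall b, dB b = 0 -> exists a, dA a = 0 /\ g0 a = b),
      (* H^1 injective *)
      (forall p, A1m p -> (exists b, g1 p = dB b) -> exists a, p = dA a)
    & (* H^1 surjective *)
      (forall c, exists p b, A1m p /\ c = g1 p + dB b)].

(* Main.v *)
Require Import Defs.
From HB Require Import structures.
From mathcomp Require Import all_boot all_order all_algebra.
From mathcomp Require Import ring.
Import GRing.Theory.
Local Open Scope ring_scope.

Section Aux.
Variables (R : comNzRingType) (S : comPzRingType) (lam : {rmorphism R -> S}) (u : S).

Lemma f1_wide (p : {poly R}) n : (size p <= n)%N ->
  f1 lam u p = \sum_(i < n) lam p`_i * u ^+ i.
Proof.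
move=> H; rewrite /f1 (big_ord_widen n (fun i => lam p`_i * u ^+ i) H).
rewrite big_mkcond /=; apply: eq_bigr => i _.
case: ifP => // /negbT; rewrite -leqNgt => Hi.
by rewrite nth_default // rmorph0 mul0r.
Qed.

Lemma f1D p q : f1 lam u (p + q) = f1 lam u p + f1 lam u q.
Proof.
rewrite (@f1_wide (p + q) (maxn (size p) (size q))) ?size_polyD //.
rewrite (@f1_wide p (maxn (size p) (size q))) ?leq_maxl //.
rewrite (@f1_wide q (maxn (size p) (size q))) ?leq_maxr //.
rewrite -big_split /=; apply: eq_bigr => i _.
by rewrite coefD rmorphD mulrDl.
Qed.

Lemma f1N p : f1 lam u (- p) = - f1 lam u p.
Proof.
rewrite (@f1_wide (- p) (size p)) ?size_polyN // /f1 -sumrN.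
by apply: eq_bigr => i _; rewrite coefN rmorphN mulNr.
Qed.

Lemma f1B p q : f1 lam u (p - q) = f1 lam u p - f1 lam u q.
Proof. by rewrite f1D f1N. Qed.

Lemma f1Z c p : f1 lam u (c *: p) = lam c * f1 lam u p.
Proof.
rewrite (@f1_wide _ (size p)) ?size_scale_leq // /f1 mulr_sumr.
by apply: eq_bigr => i _; rewrite coefZ rmorphM mulrA.
Qed.

Lemma f1C c : f1 lam u c%:P = lam c.
Proof.
rewrite (@f1_wide c%:P 1) ?size_polyC_leq1 // big_ord1 coefC /=.
by rewrite expr0 mulr1.
Qed.

Lemma f1X p : f1 lam u ('X * p) = u * f1 lam u p.
Proof.
rewrite (@f1_wide ('X * p) (size p).+1); last first.
  rewrite mulrC; case: (eqVneq p 0) => [->|nz]; first by rewrite mul0r size_poly0.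
  by rewrite size_mulX.
rewrite big_ord_recl coefXM /= rmorph0 mul0r add0r /f1 mulr_sumr.
apply: eq_bigr => i _; rewrite coefXM /= /bump /= add1n exprS.
by rewrite mulrCA.
Qed.

End Aux.

Theorem lemma3p5 (R : comNzRingType) (S : comPzRingType)
    (lam : {rmorphism R -> S}) (x : R) (u : S) :
  is_localization_at lam x -> lam x * u = 1 ->
  quasi_iso2 (@UR R) (Lx_psi x) lam (@f0 R) (f1 lam u).
Proof.
move=> [[v Hv] Hsurj Hker] Hu.
set y : {poly R} := x%:P * 'X.
have coefy : forall (a : {poly R}) n,
    ((1 - y) * a)`_n = a`_n - (if n == 0%N then 0 else x * a`_n.-1).
  move=> a n; rewrite mulrBl mul1r coefB /y -mulrA coefCM coefXM.
  by case: (n == 0%N); rewrite ?mulr0.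
have hy0 : forall a : {poly R}, ((1 - y) * a).[0] = a.[0].
  by move=> a; rewrite !horner_coef0 coefy /= subr0.
have psiE : forall a : {poly R}, Lx_psi x a = a.[0]%:P - (1 - y) * a by [].
have f1y : forall a : {poly R}, f1 lam u ((1 - y) * a) = 0.
  move=> a; rewrite mulrBl mul1r f1B /y -mulrA mul_polyC f1Z f1X.
  by rewrite mulrA Hu mul1r subrr.
split.
- split.
  + move=> a; rewrite /UR psiE coefB coefC /= coefy /= subr0 horner_coef0 subrr.
    by [].
  + by move=> a; rewrite psiE f1B f1y subr0 f1C.
- move=> a; rewrite psiE /f0 => H0 Ha; move: H0; rewrite Ha polyC0 sub0r => /eqP.
  rewrite oppr_eq0 => /eqP H.
  have all0 : forall n, a`_n = 0.
    elim=> [|n IH].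
      by move: (coefy a 0%N); rewrite H coef0 /= subr0 => <-.
    by move: (coefy a n.+1); rewrite H coef0 /= IH mulr0 subr0 => <-.
  by apply/polyP => n; rewrite all0 coef0.
- move=> b Hb.
  have [k Hk] : exists k : nat, x ^+ k * b = x ^+ k * 0 by apply: Hker; rewrite Hb rmorph0.
  rewrite mulr0 in Hk.
  set a := b *: \sum_(i < k) y ^+ i.
  have Ha : (1 - y) * a = b%:P.
    rewrite /a -scalerAr.
    have := subrXX 1 y k; rewrite expr1n.
    under eq_bigr do rewrite expr1n mul1r.
    move=> <-; rewrite scalerBr alg_polyC /y exprMn -polyC_exp mul_polyC scalerA.
    by rewrite mulrC Hk scale0r subr0.
  have Ha0 : a.[0] = b by rewrite -(hy0 a) Ha hornerC.
  exists a; split; last by rewrite /f0 Ha0.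
  by rewrite psiE Ha Ha0 subrr.
- move=> p Hp [b Hb].
  rewrite /UR in Hp; move/eqP: Hp => Hp.
  set n := size p.
  set Q := \sum_(i < n) p`_i * x ^+ (n - i).
  have HQ : lam Q = lam (x ^+ n * b).
    rewrite rmorphM -Hb /f1 mulr_sumr rmorph_sum; apply: eq_bigr => i _.
    rewrite rmorphM !rmorphXn.
    have E : lam x ^+ n = lam x ^+ (n - i) * lam x ^+ i.
      by rewrite -exprD subnK // ltnW.
    have F : lam x ^+ i * u ^+ i = 1 by rewrite -exprMn Hu expr1n.
    by rewrite E -mulrA [lam x ^+ i * _]mulrCA F mulr1 mulrC.
  have [k Hk] := Hker _ _ HQ.
  set N := (k + n)%N.
  pose D (q : {poly R}) := exists A, q = (1 - y) * A.
  have D0 : D 0 by exists 0; rewrite mulr0.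
  have DD : forall q1 q2, D q1 -> D q2 -> D (q1 + q2).
    by move=> q1 q2 [A1 ->] [A2 ->]; exists (A1 + A2); rewrite mulrDr.
  have DZ : forall c q, D q -> D (c *: q).
    by move=> c q [A ->]; exists (c *: A); rewrite scalerAr.
  have DN : forall q, D q -> D (- q).
    by move=> q [A ->]; exists (- A); rewrite mulrN.
  have Dgeo : forall m, D (1 - y ^+ m).
    move=> m; exists (\sum_(i < m) y ^+ i).
    have := subrXX 1 y m; rewrite expr1n.
    by under eq_bigr do rewrite expr1n mul1r.
  have yX : forall m, y ^+ m = x ^+ m *: 'X^m.
    by move=> m; rewrite /y exprMn -polyC_exp mul_polyC.
  have DX : forall i j, D ('X^i - x ^+ j *: 'X^(i + j)).
    move=> i j; have [A HA] := Dgeo j; exists ('X^i * A).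
    by rewrite mulrCA -HA mulrBr mulr1 yX -scalerAr exprD.
  have key : p - b%:P = \sum_(i < n) p`_i *: ('X^i - x ^+ (N - i) *: 'X^N)
                        - b *: (1 - y ^+ N).
    rewrite yX.
    under eq_bigr do rewrite scalerBr scalerA.
    rewrite sumrB -scaler_suml.
    have -> : \sum_(i < n) p`_i * x ^+ (N - i) = x ^+ k * Q.
      rewrite /Q mulr_sumr; apply: eq_bigr => i _.
      by rewrite mulrCA -exprD /N addnBA // ltnW.
    rewrite Hk mulrA -exprD -/N.
    have -> : \sum_(i < n) p`_i *: 'X^i = p by rewrite -poly_def coefK.
    rewrite scalerBr alg_polyC scalerA [b * _]mulrC.
    by rewrite opprB addrA subrK.
  have [A HA] : D (p - b%:P).
    rewrite key; apply: (DD); last by apply: (DN); apply: (DZ).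
    apply: (big_ind D D0 DD) => i _; apply: (DZ).
    have := DX i (N - i)%N; rewrite subnKC //.
    by rewrite /N ltnW // ltn_addl.
  exists (- A).
  have A0 : A.[0] = - b.
    by rewrite -(hy0 A) -HA hornerD hornerN hornerC horner_coef0 Hp add0r.
  by rewrite psiE hornerN A0 opprK mulrN opprK -HA addrC subrK.
- move=> c.
  have [a [m Ham]] := Hsurj c.
  exists ((a * x) *: 'X^(m.+1)); exists 0; split.
    by rewrite /UR coefZ coefXn /= mulr0.
  rewrite rmorph0 addr0 f1Z.
  have -> : f1 lam u 'X^(m.+1) = u ^+ m.+1.
    elim: m.+1 => [|j IH]; first by rewrite !expr0 -polyC1 f1C rmorph1.
    by rewrite exprS f1X IH exprS.
  have F : lam x ^+ m * u ^+ m = 1 by rewrite -exprMn Hu expr1n.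
  rewrite rmorphM -Ham exprS.
  by rewrite -!mulrA [lam x * (u * _)]mulrA Hu mul1r F mulr1.
Qed.
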